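(* Let $\alpha,\beta,\delta\in(0,1)$, $m=\alpha n^\beta$, $\lambda^*=\frac{\log_2(1+\delta)}{1-\beta}$, $\lambda<\lambda^*$, and $k>0$. Then $$\lim_{n\to\infty}\sum_{1\le w\le\lambda m/\log_2 n}\binom{n}{w}\frac{1}{2^m}\left(1+\left(1-2\frac{k(\log_2 m)^2}{m}\right)^w\right)^m=0.$$ *)

(* Defs.v *)
From HB Require Import structures.
From mathcomp Require Import all_boot all_order all_algebra.
From mathcomp Require Import all_classical all_reals all_analysis.
Set Implicit Arguments. Unset Strict Implicit. Unset Printing Implicit Defensive.
Import Order.TTheory GRing.Theory Num.Theory.
Local Open Scope ring_scope.

Definition log2 {R : realType} (x : R) : R := ln x / ln 2.

Definition mval {R : realType} (alpha beta : R) (n : nat) : R :=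
  alpha * (n%:R `^ beta).

(* the n-th partial expression:
   sum_{1 <= w <= lambda m / log2 n} C(n,w) 2^{-m} (1 + (1 - 2 k (log2 m)^2 / m)^w)^m.
   Terms with w > n vanish since 'C(n,w) = 0, so w ranges over 1..n. *)
Definition lemma11_sum {R : realType} (alpha beta lambda k : R) (n : nat) : R :=
  let m := mval alpha beta n in
  \sum_(1 <= w < n.+1 | w%:R <= lambda * m / log2 n%:R)
     'C(n, w)%:R * (2 `^ m)^-1 *
     ((1 + (1 - 2 * (k * (log2 m) ^+ 2) / m) ^+ w) `^ m).

(* Main.v *)
Require Import Defs.
From HB Require Import structures.
From mathcomp Require Import all_boot all_order all_algebra.
From mathcomp Require Import all_classical all_reals all_analysis.
From mathcomp Require Import lra ring.
Import numFieldNormedType.Exports.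
Import Order.TTheory GRing.Theory Num.Theory.
Local Open Scope classical_set_scope.
Local Open Scope ring_scope.

Lemma near_ln_nat (R : realType) (P : R -> Prop) :
  (\forall t \near +oo, P t) -> \forall n \near \oo, P (ln n%:R).
Proof.
move=> [M [Mr HM]].
have := cvgr_idn (R:=R).
move/cvgryPgt => /(_ (expR M)).
apply: filterS => n Hn.
apply: HM.
rewrite -ltr_expR lnK // posrE.
by apply: lt_trans Hn; exact: expR_gt0.
Qed.

Lemma ffact_le_exp (n w : nat) : (n ^_ w <= n ^ w)%N.
Proof.
elim: w => [|w IH]; first by rewrite ffactn0 expn0.
by rewrite ffactnSr expnS mulnC leq_mul // leq_subr.
Qed.

Lemma binom_le1 (R : realType) (n w : nat) :
  ('C(n, w)%:R : R) <= n%:R ^+ w.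
Proof.
rewrite -natrX ler_nat.
apply: leq_trans (ffact_le_exp n w).
by rewrite -bin_ffact leq_pmulr ?fact_gt0.
Qed.

Lemma binom_le2 (R : realType) (n w : nat) : (0 < w)%N ->
  ('C(n, w)%:R : R) * w%:R ^+ w <= n%:R ^+ w * expR w%:R.
Proof.
move=> w0.
have h1 : ('C(n, w)%:R : R) * w`!%:R <= n%:R ^+ w.
  by rewrite -natrM -natrX ler_nat bin_ffact ffact_le_exp.
have h2 : (w%:R : R) ^+ w <= w`!%:R * expR w%:R.
  case: w w0 h1 => // w _ h1.
  have h := expR_ge1Dxn w (ler0n R w.+1).
  rewrite -ler_pdivrMl ?ltr0n ?fact_gt0 //.
  apply: le_trans h.
  by rewrite mulrC lerDr.
have C0 : (0 : R) <= 'C(n, w)%:R by [].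
apply: le_trans (ler_wpM2l C0 h2) _.
rewrite mulrA ler_wpM2r // expR_ge0.
Qed.

Lemma ln2_gt0 (R : realType) : (0 : R) < ln 2.
Proof. by apply: ln_gt0; rewrite ltr1n. Qed.

Lemma ln2_le1 (R : realType) : ln (2 : R) <= 1.
Proof. by have := @le_ln1Dx R 1; rewrite (_ : 1 + 1 = 2) //; apply; lra. Qed.

Lemma ev_lin (R : realType) (a b : R) : 0 < a ->
  \forall t \near +oo, b <= a * t.
Proof.
move=> a0.
have := @nbhs_pinfty_ge R (b / a) (num_real _).
apply: filterS => t ht.
by rewrite mulrC -ler_pdivrMr.
Qed.

Lemma ev_quad (R : realType) (a b c : R) : 0 < a ->
  \forall t \near +oo, b * t + c <= a * t ^+ 2.
Proof.
move=> a0.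
near=> t.
have t1 : 1 <= t by near: t; apply: nbhs_pinfty_ge; exact: num_real.
have h : `|b| + `|c| <= a * t by near: t; exact: ev_lin.
have hb : b * t <= `|b| * t by rewrite ler_wpM2r ?ler_norm //; lra.
have hc : c <= `|c| * t by have := ler_norm c; have := normr_ge0 c; nra.
have : (`|b| + `|c|) * t <= a * t * t by rewrite ler_wpM2r //; lra.
rewrite expr2; lra.
Unshelve. all: end_near.
Qed.

Lemma ev_cubic (R : realType) (a b c d : R) : 0 < a ->
  \forall t \near +oo, b * t ^+ 2 + c * t + d <= a * t ^+ 3.
Proof.
move=> a0.
near=> t.
have t1 : 1 <= t by near: t; apply: nbhs_pinfty_ge; exact: num_real.
have h : `|b| + `|c| + `|d| <= a * t by near: t; exact: ev_lin.
have t2 : t <= t ^+ 2 by rewrite expr2; nra.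
have hb : b * t ^+ 2 <= `|b| * t ^+ 2 by rewrite ler_wpM2r ?ler_norm //; nra.
have hc : c * t <= `|c| * t ^+ 2 by have := ler_norm c; have := normr_ge0 c; nra.
have hd : d <= `|d| * t ^+ 2 by have := ler_norm d; have := normr_ge0 d; nra.
have : (`|b| + `|c| + `|d|) * t ^+ 2 <= a * t * t ^+ 2 by rewrite ler_wpM2r //; nra.
rewrite (exprS t 2); lra.
Unshelve. all: end_near.
Qed.

Lemma ln_le_lin (R : realType) (eta t : R) : 0 < eta -> 0 < t ->
  ln t <= eta * t - 1 - ln eta.
Proof.
move=> e0 t0.
have := @le_ln1Dx R (eta * t - 1).
have -> : 1 + (eta * t - 1) = eta * t by ring.
rewrite lnM ?posrE //.
have : -1 < eta * t - 1 by have := mulr_gt0 e0 t0; lra.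
move=> h /(_ h); lra.
Qed.

Lemma expR_ge_cube (R : realType) (x : R) : 0 <= x -> x ^+ 3 / 6 <= expR x.
Proof.
move=> x0.
have := expR_ge1Dxn 2 x0.
have -> : (3`!)%:R = 6 :> R by [].
lra.
Qed.

Lemma expR_le_of (R : realType) (x e : R) : 0 < e -> x <= ln e -> expR x <= e.
Proof. by move=> e0 h; rewrite -(lnK (x:=e)) ?posrE // ler_expR. Qed.

Lemma asym (R : realType) (alpha beta k lam1 gam e : R) :
  0 < alpha -> 0 < beta -> 0 < k -> 0 < lam1 -> 0 < gam ->
  lam1 * ln 2 * (1 - beta) = ln 2 - gam -> 0 < e ->
  \forall t \near +oo,
  [/\ 0 < t, 0 < ln alpha + beta * t,
      2 * k * (ln alpha + beta * t) ^+ 2 / (ln 2) ^+ 2 <= alpha * expR (beta * t),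
      t - 2 * k * (ln alpha + beta * t) ^+ 2 / (ln 2) ^+ 2 / 4 <= 0
    & (lam1 * ln 2 * (1 + t - (ln alpha + beta * t) - ln (ln 2) + ln 8 + ln t) / t
        + 8 * t / (2 * k * (ln alpha + beta * t) ^+ 2 / (ln 2) ^+ 2 * ln 2)
        <= ln 2 - gam / 2)
    /\ (expR t * (expR (t - 2 * k * (ln alpha + beta * t) ^+ 2 / (ln 2) ^+ 2 / 4)
        + expR (- (alpha * expR (beta * t) / 8))
        + expR (- (gam / 2 * (alpha * expR (beta * t))))) <= e)].
Proof.
move=> a0 b0 k0 l0 g0 hlg e0.
have l2 := ln2_gt0 R.
set A := ln alpha.
set l := ln (2 : R).
set q := 2 * k / l ^+ 2.
have l2' : 0 < l by exact: l2.
have hlg' : lam1 * l * (1 - beta) = l - gam by exact: hlg.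
have q0 : 0 < q by rewrite /q; apply: divr_gt0; [lra | exact: exprn_gt0].
set E := ln (e / 3).
set eta := gam / (8 * lam1 * l).
have eta0 : 0 < eta by rewrite /eta; apply: divr_gt0 => //; apply: mulr_gt0 => //; lra.
have leta : lam1 * l * eta = gam / 8.
  by rewrite /eta; field; rewrite (gt_eqF l2) (gt_eqF l0).
set K0 := 1 - A - ln l + ln 8.
have ab0 : 0 < alpha * beta ^+ 3 / 6 by apply: divr_gt0; [apply: mulr_gt0 => //; exact: exprn_gt0 | lra].
have qb0 : 0 < q * beta ^+ 2 / 4 by apply: divr_gt0; [apply: mulr_gt0 => //; exact: exprn_gt0 | lra].
have glq : 0 < gam * l * q * beta ^+ 2 by apply: mulr_gt0 => //; [apply: mulr_gt0 => //; exact: mulr_gt0| exact: exprn_gt0].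
have ab1 : 0 < alpha * beta ^+ 3 / 6 / 8 by apply: divr_gt0 => //; lra.
have ab2 : 0 < gam / 2 * (alpha * beta ^+ 3 / 6) by apply: mulr_gt0 => //; lra.
near=> t.
have t1 : 1 <= t by near: t; apply: nbhs_pinfty_ge; exact: num_real.
have t0 : 0 < t by lra.
set ls := A + beta * t.
set m := alpha * expR (beta * t).
set Q := 2 * k * ls ^+ 2 / l ^+ 2.
have QE : Q = q * ls ^+ 2 by rewrite /Q /q; ring.
have lsE : ls ^+ 2 = beta ^+ 2 * t ^+ 2 + 2 * A * beta * t + A ^+ 2 by rewrite /ls; ring.
have F1 : 1 - A <= beta * t by near: t; exact: ev_lin.
have ls1 : 1 <= ls by rewrite /ls; lra.
have Q0 : 0 < Q by rewrite QE; apply: mulr_gt0 => //; apply: exprn_gt0; lra.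
have bt0 : 0 <= beta * t by apply: mulr_ge0; lra.
have mcube : alpha * beta ^+ 3 / 6 * t ^+ 3 <= m.
  rewrite /m.
  have := @expR_ge_cube R _ bt0.
  rewrite exprMn => h.
  have : alpha * (beta ^+ 3 * t ^+ 3 / 6) <= alpha * expR (beta * t) by rewrite ler_wpM2l //; lra.
  have -> : alpha * beta ^+ 3 / 6 * t ^+ 3 = alpha * (beta ^+ 3 * t ^+ 3 / 6) by ring.
  done.
have F2 : q * beta ^+ 2 * t ^+ 2 + 2 * q * A * beta * t + q * A ^+ 2 <= alpha * beta ^+ 3 / 6 * t ^+ 3.
  near: t; by apply: ev_cubic.
have QE2 : Q = q * beta ^+ 2 * t ^+ 2 + 2 * q * A * beta * t + q * A ^+ 2 by rewrite QE lsE; ring.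
have F3 : (1 - q * A * beta / 2) * t + (- (q * A ^+ 2 / 4)) <= q * beta ^+ 2 / 4 * t ^+ 2.
  near: t; by apply: ev_quad.
have F3' : (2 - q * A * beta / 2) * t + (- (q * A ^+ 2 / 4) - E) <= q * beta ^+ 2 / 4 * t ^+ 2.
  near: t; by apply: ev_quad.
have F4 : (32 - 2 * gam * l * q * A * beta) * t + (- (gam * l * q * A ^+ 2)) <= gam * l * q * beta ^+ 2 * t ^+ 2.
  near: t; by apply: ev_quad.
have F5 : lam1 * l * (K0 - 1 - ln eta) <= gam / 8 * t.
  near: t; apply: ev_lin; lra.
have F6 : 0 * t ^+ 2 + 1 * t + (- E) <= alpha * beta ^+ 3 / 6 / 8 * t ^+ 3.
  near: t; by apply: ev_cubic.
have F7 : 0 * t ^+ 2 + 1 * t + (- E) <= gam / 2 * (alpha * beta ^+ 3 / 6) * t ^+ 3.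
  near: t; by apply: ev_cubic.
split => //.
- by rewrite /ls; lra.
- rewrite -/Q; lra.
- rewrite -/Q; lra.
split.
- have lt := @ln_le_lin R _ _ eta0 t0.
  have S0 : lam1 * l * ln t <= lam1 * l * (eta * t - 1 - ln eta).
    by rewrite ler_wpM2l //; apply: mulr_ge0; lra.
  have S0e : lam1 * l * (eta * t - 1 - ln eta) = gam / 8 * t - lam1 * l * (1 + ln eta).
    by rewrite -leta; ring.
  have S0f : lam1 * l * (1 - beta) * t = (l - gam) * t by rewrite hlg'.
  have S1 : lam1 * l * (1 + t - ls - ln l + ln 8 + ln t) <= (l - gam + gam / 4) * t.
    rewrite /ls; move: F5; rewrite /K0; lra.
  have S1' : lam1 * l * (1 + t - ls - ln l + ln 8 + ln t) / t <= l - gam + gam / 4.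
    by rewrite ler_pdivrMr.
  have Ql : 0 < Q * l by apply: mulr_gt0.
  have S2e : gam * l * Q = gam * l * q * beta ^+ 2 * t ^+ 2 + 2 * gam * l * q * A * beta * t + gam * l * q * A ^+ 2.
    by rewrite QE2; ring.
  have S2 : 8 * t / (Q * l) <= gam / 4.
    rewrite ler_pdivrMr //; lra.
  rewrite -/Q; lra.
- have e3 : 0 < e / 3 by lra.
  rewrite !mulrDr -!expRD.
  have X1 : expR (t + (t - Q / 4)) <= e / 3.
    apply: expR_le_of => //; rewrite -/E; lra.
  have X2 : expR (t + - (m / 8)) <= e / 3.
    apply: expR_le_of => //; rewrite -/E; lra.
  have m2 : gam / 2 * (alpha * beta ^+ 3 / 6 * t ^+ 3) <= gam / 2 * m.
    by rewrite ler_wpM2l //; lra.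
  have X3 : expR (t + - (gam / 2 * m)) <= e / 3.
    apply: expR_le_of => //; rewrite -/E; lra.
  rewrite -/Q -/m; lra.
Unshelve. all: end_near.
Qed.

Lemma y_bound (R : realType) (eps : R) (w : nat) :
  0 <= eps <= 1 ->
  0 <= (1 - eps) ^+ w /\ (1 - eps) ^+ w * (1 + eps * w%:R) <= 1.
Proof.
move=> /andP[e0 e1].
have h0 : 0 <= 1 - eps by lra.
split; first exact: exprn_ge0.
have h1 : (1 - eps) ^+ w <= expR (- (eps * w%:R)).
  rewrite -mulNr expRM_natr lerXn2r ?nnegrE ?expR_ge0 //.
  by have := expR_ge1Dx (- eps); lra.
have h2 : 0 <= 1 + eps * w%:R by have := ler0n R w; nra.
apply: le_trans (ler_wpM2r h2 h1) _.
have := expR_ge1Dx (eps * w%:R).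
have := expRxMexpNx_1 (eps * w%:R).
have := expR_ge0 (- (eps * w%:R)).
nra.
Qed.

Lemma term_bound (R : realType) (t m ls k lam1 c C : R) (w : nat) :
  0 < t -> 0 < m -> 0 < ls -> ls = ln m -> 0 < k -> 0 < lam1 ->
  let Q := 2 * k * ls ^+ 2 / (ln 2) ^+ 2 in
  Q <= m ->
  (0 < w)%N -> w%:R <= expR t ->
  0 <= C -> C <= expR (w%:R * t) -> C <= expR (w%:R * (1 + t - ln w%:R)) ->
  w%:R <= lam1 * m * ln 2 / t ->
  t - Q / 4 <= 0 ->
  lam1 * ln 2 * (1 + t - ls - ln (ln 2) + ln 8 + ln t) / t
     + 8 * t / (Q * ln 2) <= ln 2 - c ->
  C * expR (m * (ln (1 + (1 - Q / m) ^+ w) - ln 2))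
    <= expR (t - Q / 4) + expR (- (m / 8)) + expR (- (c * m)).
Proof.
move=> t0 m0 ls0 lsm k0 l0 Q Qm w0 wn C0 C1 C2 wl hA hB.
have l2 := ln2_gt0 R.
have l21 := ln2_le1 R.
have Q0 : 0 < Q by rewrite /Q; apply: divr_gt0; [apply: mulr_gt0; [lra|exact: exprn_gt0]|exact: exprn_gt0].
set eps := Q / m.
have e0 : 0 <= eps by rewrite /eps; apply: divr_ge0; lra.
have e1 : eps <= 1 by rewrite /eps ler_pdivrMr // mul1r.
have meps : m * eps = Q by rewrite /eps mulrC divfK //; lra.
set y := (1 - eps) ^+ w.
set s := eps * w%:R.
have [y0 y1] : 0 <= y /\ y * (1 + s) <= 1 by apply: y_bound; rewrite e0 e1.
have w1 : (1 : R) <= w%:R by rewrite ler1n.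
have s0 : 0 <= s by rewrite /s; nra.
have ms : m * s = Q * w%:R by rewrite /s mulrA meps.
have ep : 0 < 1 + y by lra.
have C1' : C * expR (m * (ln (1 + y) - ln 2)) <= expR (w%:R * t + m * (ln (1 + y) - ln 2)).
  by rewrite expRD ler_wpM2r ?expR_ge0.
have C2' : C * expR (m * (ln (1 + y) - ln 2)) <= expR (w%:R * (1 + t - ln w%:R) + m * (ln (1 + y) - ln 2)).
  by rewrite expRD ler_wpM2r ?expR_ge0.
have E1 := expR_ge0 (t - Q / 4).
have E2 := expR_ge0 (- (m / 8)).
have E3 := expR_ge0 (- (c * m)).
have [hw8|hw8] := leP (w%:R * t) (m * ln 2 / 8).
-
  have L1 : ln (1 + y) - ln 2 <= (y - 1) / 2.
    have -> : ln (1 + y) - ln 2 = ln (1 + (y - 1) / 2).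
      by rewrite -ln_div ?posrE //; congr ln; field.
    by apply: le_ln1Dx; lra.
  have [s1|s1] := leP s 1.
  + have L2 : (y - 1) / 2 <= - s / 4 by nra.
    have L3 : m * (ln (1 + y) - ln 2) <= - (Q * w%:R) / 4.
      have : m * (ln (1 + y) - ln 2) <= m * (- s / 4) by rewrite ler_wpM2l; lra.
      nra.
    apply: le_trans C1' _.
    have : expR (w%:R * t + m * (ln (1 + y) - ln 2)) <= expR (t - Q / 4).
      rewrite ler_expR; nra.
    lra.
  + have L2 : (y - 1) / 2 <= - 1 / 4 by nra.
    have L3 : m * (ln (1 + y) - ln 2) <= - m / 4.
      have : m * (ln (1 + y) - ln 2) <= m * (- 1 / 4) by rewrite ler_wpM2l; lra.
      lra.
    apply: le_trans C1' _.
    have : expR (w%:R * t + m * (ln (1 + y) - ln 2)) <= expR (- (m / 8)).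
      rewrite ler_expR; nra.
    lra.
-
  have s0' : 0 < s.
    rewrite /s; apply: mulr_gt0; last by rewrite ltr0n.
    by rewrite /eps; apply: divr_gt0.
  have B1 : ln (1 + y) <= y by apply: le_ln1Dx; lra.
  have B2 : y * s <= 1 by nra.
  have wr0 : (0 : R) < w%:R by rewrite ltr0n.
  have Qw : Q * w%:R = m * s by rewrite -ms.
  have B3 : m * y <= 8 * t * m / (Q * ln 2).
    have Ql : 0 < Q * ln 2 by apply: mulr_gt0.
    rewrite ler_pdivlMr //.
    rewrite -(ler_pM2r wr0).
    have -> : m * y * (Q * ln 2) * w%:R = (m * y * s) * (m * ln 2).
      have -> : m * y * (Q * ln 2) * w%:R = m * y * ln 2 * (Q * w%:R) by ring.
      by rewrite Qw; ring.
    have h1 : (m * y * s) * (m * ln 2) <= m * (m * ln 2).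
      rewrite ler_wpM2r //; first by apply: mulr_ge0; lra.
      by rewrite -mulrA; nra.
    apply: le_trans h1 _.
    nra.
  have wgt : m * ln 2 / (8 * t) < w%:R.
    rewrite ltr_pdivrMr; last lra.
    lra.
  have pos1 : 0 < m * ln 2 / (8 * t).
    apply: divr_gt0; [exact: mulr_gt0|lra].
  have B4 : ls + ln (ln 2) - ln 8 - ln t < ln w%:R.
    have -> : ls + ln (ln 2) - ln 8 - ln t = ln (m * ln 2 / (8 * t)).
      have p1 : 0 < m * ln 2 by apply: mulr_gt0.
      have p2 : 0 < 8 * t by lra.
      have p3 : (0 : R) < 8 by lra.
      rewrite ln_div ?posrE // lnM ?posrE // lnM ?posrE //.
      rewrite lsm; ring.
    by rewrite ltr_ln ?posrE.
  have B5 : ln w%:R <= t.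
    by rewrite -[X in _ <= X]expRK ler_ln ?posrE ?expR_gt0.
  set D := 1 + t - ls - ln (ln 2) + ln 8 + ln t.
  have D1 : 1 + t - ln w%:R <= D by rewrite /D; lra.
  have B6 : w%:R * (1 + t - ln w%:R) <= lam1 * m * ln 2 / t * D.
    apply: le_trans (_ : w%:R * D <= _).
      by rewrite ler_wpM2l //; lra.
    by rewrite ler_wpM2r //; lra.
  have B7 : m * ln (1 + y) <= 8 * t * m / (Q * ln 2) by nra.
  have eq1 : lam1 * m * ln 2 / t * D + 8 * t * m / (Q * ln 2) - m * ln 2
     = m * (lam1 * ln 2 * D / t + 8 * t / (Q * ln 2) - ln 2) by ring.
  have B8 : m * (lam1 * ln 2 * D / t + 8 * t / (Q * ln 2) - ln 2) <= - (c * m).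
    have : m * (lam1 * ln 2 * D / t + 8 * t / (Q * ln 2) - ln 2) <= m * (- c).
      by rewrite ler_wpM2l //; [lra | rewrite /D; lra].
    lra.
  apply: le_trans C2' _.
  have : expR (w%:R * (1 + t - ln w%:R) + m * (ln (1 + y) - ln 2)) <= expR (- (c * m)).
    by rewrite ler_expR; lra.
  lra.
Qed.

Lemma binom_le3 (R : realType) (n w : nat) : (0 < w)%N -> (0 < n)%N ->
  ('C(n, w)%:R : R) <= expR (w%:R * (1 + ln n%:R - ln w%:R)).
Proof.
move=> w0 n0.
have h := binom_le2 R n w w0.
have ww : (0 : R) < w%:R ^+ w by apply: exprn_gt0; rewrite ltr0n.
have -> : (w%:R : R) * (1 + ln n%:R - ln w%:R)
   = w%:R + w%:R * ln n%:R + - (w%:R * ln w%:R) by ring.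
rewrite expRD expRD expRN !expRM_natl !lnK ?posrE ?ltr0n //.
rewrite ler_pdivlMr //.
by rewrite [X in _ <= X]mulrC.
Qed.

Lemma term_eq (R : realType) (C m x : R) : 0 < 1 + x ->
  C * (2 `^ m)^-1 * (1 + x) `^ m = C * expR (m * (ln (1 + x) - ln 2)).
Proof.
move=> x0.
rewrite /powR (gt_eqF x0) (_ : (2 : R) == 0 = false); last by apply: gt_eqF; lra.
by rewrite mulrBr expRD expRN; ring.
Qed.

Theorem lemma11 (R : realType) (alpha beta delta lambda k : R) :
  0 < alpha < 1 -> 0 < beta < 1 -> 0 < delta < 1 ->
  lambda < log2 (1 + delta) / (1 - beta) ->
  0 < k ->
  lemma11_sum alpha beta lambda k @ \oo --> 0.
Proof.
move=> /andP[a0 a1] /andP[b0 b1] /andP[d0 d1] hl k0.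
have l2 := ln2_gt0 R.
have ld0 : 0 < ln (1 + delta) by apply: ln_gt0; lra.
have ld1 : ln (1 + delta) < ln 2 by rewrite ltr_ln ?posrE; lra.
set lst := log2 (1 + delta) / (1 - beta).
have lstE : lst * (1 - beta) = ln (1 + delta) / ln 2.
  by rewrite /lst /log2 divfK //; apply: lt0r_neq0; lra.
have lst0 : 0 < lst.
  rewrite /lst /log2; apply: divr_gt0; [exact: divr_gt0 | lra].
have lst1 : lst * (1 - beta) < 1 by rewrite lstE ltr_pdivrMr // mul1r.
set lam1 := Num.max lambda (lst / 2).
have l10 : 0 < lam1.
  apply: lt_le_trans (_ : 0 < lst / 2) _; first lra.
  by rewrite /lam1 le_max lexx orbT.
have l1l : lam1 < lst by rewrite /lam1 gt_max hl /=; lra.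
have l1m : lambda <= lam1 by rewrite /lam1 le_max lexx.
have lam1b : lam1 * (1 - beta) < 1.
  apply: le_lt_trans lst1; rewrite ler_wpM2r //; lra.
set gam := ln 2 * (1 - lam1 * (1 - beta)).
have g0 : 0 < gam by apply: mulr_gt0 => //; lra.
have hlg : lam1 * ln 2 * (1 - beta) = ln 2 - gam by rewrite /gam; ring.
apply/cvgrPdist_le => /= e e0.
have EV := @asym R _ _ _ _ _ _ a0 b0 k0 l10 g0 hlg e0.
have EVn := @near_ln_nat R _ EV.
apply: filterS EVn => n [T0 T1 T2 T3 [T4 T5]].

set t := ln (R:=R) (n%:R : R).
move: T0 T1 T2 T3 T4 T5; rewrite -/t => T0 T1 T2 T3 T4 T5.
have n0 : (0 < n)%N.
  rewrite lt0n; apply/eqP => nz.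
  by move: T0; rewrite /t nz ln0 // ltxx.
have nr0 : (0 : R) < n%:R by rewrite ltr0n.
have nt : (n%:R : R) = expR t by rewrite /t lnK // posrE.
set ls := ln alpha + beta * t.
set m := alpha * expR (beta * t).
have m0 : 0 < m by apply: mulr_gt0 => //; exact: expR_gt0.
have hm : mval alpha beta n = m.
  by rewrite /mval /powR (gt_eqF nr0) /m mulrC.
have lsm : ls = ln m by rewrite /m lnM ?posrE ?expR_gt0 // expRK.
have hlm : log2 m = ls / ln 2 by rewrite /log2 lsm.
rewrite /lemma11_sum /= hm hlm.
set Q := 2 * k * ls ^+ 2 / (ln 2) ^+ 2.
have epsE : 2 * (k * (ls / ln 2) ^+ 2) / m = Q / m by rewrite /Q expr_div_n; ring.
rewrite epsE sub0r normrN.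
set U := expR (t - Q / 4) + expR (- (m / 8)) + expR (- (gam / 2 * m)).
have U0 : 0 <= U by rewrite /U; have := expR_ge0 (t - Q / 4);
  have := expR_ge0 (- (m / 8)); have := expR_ge0 (- (gam / 2 * m)); lra.
have Q0 : Q <= m := T2.
rewrite ger0_norm; last first.
  apply: sumr_ge0 => w _; apply: mulr_ge0; last exact: powR_ge0.
  by apply: mulr_ge0 => //; rewrite invr_ge0 powR_ge0.
rewrite big_mkcond /=.
apply: le_trans (_ : \sum_(1 <= w < n.+1) U <= _); last first.
  rewrite sumr_const_nat subSS subn0 -mulr_natl nt; exact: T5.
apply: ler_sum_nat => w /andP[w1 wn].
case: ifP => hw; last exact: U0.
have e01 : 0 <= Q / m <= 1.
  have Qp : 0 <= Q by rewrite /Q; apply: divr_ge0; [apply: mulr_ge0; [lra | exact: sqr_ge0] | exact: sqr_ge0].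
  apply/andP; split; first by apply: divr_ge0 => //; exact: ltW.
  by rewrite ler_pdivrMr // mul1r.
have [y0 _] := @y_bound R _ w e01.
rewrite term_eq; last lra.
have l1e : lam1 * m / (t / ln 2) = lam1 * m * ln 2 / t by rewrite invf_div mulrA.
apply: (@term_bound R t m ls k lam1 (gam / 2)) => //.
- rewrite -nt ler_nat; by rewrite ltnS in wn.
- rewrite expRM_natl -nt; exact: binom_le1.
- exact: (@binom_le3 R n w w1 n0).
- rewrite -l1e; apply: le_trans hw _.
  rewrite ler_wpM2r //. all: try (rewrite invr_ge0; apply: divr_ge0; [exact: ltW | exact: ltW]).
  by rewrite ler_wpM2r //; exact: ltW.
Qed.
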